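(* Let $\mathcal H$ be an infinite-dimensional separable Hilbert space with orthonormal basis $\{|\varphi_i\rangle\}_{i=1}^\infty$, and let $\big[\langle\varphi_i|\hat\varrho|\varphi_j\rangle\big]_{i,j=1}^{\infty}$ be an infinite complex matrix. This matrix represents a quantum state (i.e. is the matrix of a density operator in this basis) if and only if: (i) $\sum_{i,j=1}^{\infty}|\langle\varphi_i|\hat\varrho|\varphi_j\rangle|^2\le 1$; (ii) $\langle\varphi_i|\hat\varrho|\varphi_j\rangle=\overline{\langle\varphi_j|\hat\varrho|\varphi_i\rangle}$ for all $1\le i,j<\infty$; (iii) \[\lim_{n\to\infty}\sum_{k=0}^{n}(-1)^k\binom{n}{k}\sum_{i=1}^{\infty}\langle\varphi_i|\hat\varrho^{k+1}|\varphi_i\rangle=0;\] (iv) $\sum_{i=1}^{\infty}\langle\varphi_i|\hat\varrho|\varphi_i\rangle=1$.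
   Context: A density operator on $\mathcal H$ is an operator $\hat\varrho:\mathcal H\to\mathcal H$ defined on all of $\mathcal H$ which is positive, self-adjoint, and has trace $1$. When condition (i) holds, the matrix defines a unique Hilbert–Schmidt operator $\hat\varrho$ on $\mathcal H$ with the given matrix elements; powers refer to this operator. *)

(* Defs.v *)
From Stdlib Require Import Reals.
From Coquelicot Require Import Coquelicot.
Open Scope R_scope.

(* Hilbert space H = l^2(N) (realised by coordinates in the orthonormal basis
   {phi_i}, indexed from 0 instead of 1). *)
Definition vec := nat -> C.

(* sum of a complex series (real and imaginary parts; 0 if divergent) *)
Definition CSeries (a : nat -> C) : C :=
  (Series (fun n => fst (a n)), Series (fun n => snd (a n))).

Definition is_l2 (x : vec) : Prop := ex_series (fun n => (Cmod (x n)) ^ 2).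

Definition inner (x y : vec) : C := CSeries (fun n => Cmult (Cconj (x n)) (y n)).

Definition basis (i : nat) : vec := fun n => if Nat.eqb n i then RtoC 1 else RtoC 0.

Definition density_operator (A : vec -> vec) : Prop :=
  (forall x, is_l2 x -> is_l2 (A x)) /\
  (forall x y, is_l2 x -> is_l2 y ->
     A (fun n => Cplus (x n) (y n)) = (fun n => Cplus (A x n) (A y n))) /\
  (forall (c : C) x, is_l2 x -> A (fun n => Cmult c (x n)) = (fun n => Cmult c (A x n))) /\
  (forall x y, is_l2 x -> is_l2 y -> inner x (A y) = inner (A x) y) /\
  (forall x, is_l2 x -> 0 <= fst (inner x (A x))) /\
  is_series (fun i => inner (basis i) (A (basis i))) (RtoC 1).

Definition represents_state (M : nat -> nat -> C) : Prop :=
  exists A : vec -> vec, density_operator A /\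
    forall i j, inner (basis i) (A (basis j)) = M i j.

Definition mprod (M N : nat -> nat -> C) : nat -> nat -> C :=
  fun i j => CSeries (fun l => Cmult (M i l) (N l j)).

(* mpowS M k = matrix of rho^(k+1) *)
Fixpoint mpowS (M : nat -> nat -> C) (k : nat) : nat -> nat -> C :=
  match k with
  | O => M
  | S k' => mprod M (mpowS M k')
  end.

(* Main.v *)
Require Import Defs.
From Stdlib Require Import Reals Lra Psatz FunctionalExtensionality.
From Coquelicot Require Import Coquelicot.
Open Scope R_scope.


Ltac cunfold := unfold Cplus, Cmult, Copp, Cminus, Cconj, RtoC in *.
Ltac csolve := intros; cunfold; apply injective_projections; simpl; ring.

Lemma C_lim_split (u : nat -> C) (l : C) :
  filterlim u eventually (locally l) <->
  (is_lim_seq (fun n => fst (u n)) (fst l) /\ is_lim_seq (fun n => snd (u n)) (snd l)).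
Proof.
  split.
  - intros H. split; apply (filterlim_locally (F:=eventually)); intros eps;
    destruct (proj1 (filterlim_locally u l) H eps) as [N HN];
    exists N; intros n Hn; destruct (HN n Hn) as [H1 H2]; auto.
  - intros [H1 H2]. apply filterlim_locally. intros eps.
    destruct (proj1 (filterlim_locally _ _) H1 eps) as [N1 HN1].
    destruct (proj1 (filterlim_locally _ _) H2 eps) as [N2 HN2].
    exists (max N1 N2). intros n Hn. split.
    + apply HN1. lia.
    + apply HN2. lia.
Qed.

Lemma sum_n_fst (a : nat -> C) n : fst (sum_n a n) = sum_n (fun k => fst (a k)) n.
Proof. induction n. rewrite !sum_O; auto. rewrite !sum_Sn. simpl. rewrite <- IHn. auto. Qed.
Lemma sum_n_snd (a : nat -> C) n : snd (sum_n a n) = sum_n (fun k => snd (a k)) n.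
Proof. induction n. rewrite !sum_O; auto. rewrite !sum_Sn. simpl. rewrite <- IHn. auto. Qed.

Lemma is_series_C (a : nat -> C) (l : C) :
  is_series a l <-> (is_series (fun n => fst (a n)) (fst l) /\ is_series (fun n => snd (a n)) (snd l)).
Proof.
  unfold is_series. rewrite (C_lim_split (sum_n a)).
  unfold is_lim_seq. split; intros [H1 H2]; split.
  - eapply filterlim_ext; [|exact H1]. intros n; exact (sum_n_fst a n).
  - eapply filterlim_ext; [|exact H2]. intros n; exact (sum_n_snd a n).
  - eapply filterlim_ext; [|exact H1]. intros n; exact (eq_sym (sum_n_fst a n)).
  - eapply filterlim_ext; [|exact H2]. intros n; exact (eq_sym (sum_n_snd a n)).
Qed.

Lemma exs_plus (a b : nat -> R) : ex_series a -> ex_series b -> ex_series (fun n => a n + b n).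
Proof. intros Ha Hb. exact (ex_series_plus (K:=R_AbsRing) (V:=R_NormedModule) a b Ha Hb). Qed.
Lemma exs_scal (c : R) (a : nat -> R) : ex_series a -> ex_series (fun n => c * a n).
Proof. intros Ha. exact (ex_series_scal_l (K:=R_AbsRing) (V:=R_NormedModule) c a Ha). Qed.
Lemma exs_opp (a : nat -> R) : ex_series a -> ex_series (fun n => - a n).
Proof. intros Ha. exact (ex_series_opp (K:=R_AbsRing) (V:=R_NormedModule) a Ha). Qed.
Lemma exs_minus (a b : nat -> R) : ex_series a -> ex_series b -> ex_series (fun n => a n - b n).
Proof. intros Ha Hb. apply exs_plus; auto. apply exs_opp; auto. Qed.

Definition cconv (a : nat -> C) := ex_series (fun n => fst (a n)) /\ ex_series (fun n => snd (a n)).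

Lemma cconv_is_series a : cconv a -> is_series a (CSeries a).
Proof. intros [H1 H2]. apply is_series_C; split; apply Series_correct; auto. Qed.

Lemma is_series_CSeries a l : is_series a l -> CSeries a = l /\ cconv a.
Proof. intros H. apply is_series_C in H as [H1 H2]. split.
  unfold CSeries. rewrite (is_series_unique _ _ H1), (is_series_unique _ _ H2). destruct l; auto.
  split; eexists; eauto. Qed.

Lemma CSeries_ext a b : (forall n, a n = b n) -> CSeries a = CSeries b.
Proof. intros H. unfold CSeries. f_equal; apply Series_ext; intros; rewrite H; auto. Qed.

Lemma cconv_ext a b : (forall n, a n = b n) -> cconv a -> cconv b.
Proof. intros H [H1 H2]; split; [eapply ex_series_ext; [|exact H1] | eapply ex_series_ext; [|exact H2]]; intros; simpl; rewrite H; auto. Qed.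

Lemma cconv_plus a b : cconv a -> cconv b -> cconv (fun n => Cplus (a n) (b n)).
Proof. intros [H1 H2] [H3 H4]; split; simpl; apply exs_plus; auto. Qed.

Lemma CSeries_plus a b : cconv a -> cconv b ->
  CSeries (fun n => Cplus (a n) (b n)) = Cplus (CSeries a) (CSeries b).
Proof. intros [H1 H2] [H3 H4]. unfold CSeries; simpl. rewrite !Series_plus; auto. Qed.

Lemma cconv_scal c a : cconv a -> cconv (fun n => Cmult c (a n)).
Proof. intros [H1 H2]; split; simpl.
  - apply ex_series_ext with (fun n => fst c * fst (a n) + (- snd c) * snd (a n)). intros; simpl; ring.
    apply exs_plus; apply exs_scal; auto.
  - apply ex_series_ext with (fun n => fst c * snd (a n) + snd c * fst (a n)). intros; simpl; ring.
    apply exs_plus; apply exs_scal; auto.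
Qed.

Lemma CSeries_scal c a : cconv a -> CSeries (fun n => Cmult c (a n)) = Cmult c (CSeries a).
Proof. intros [H1 H2]. unfold CSeries; simpl.
  assert (E1 := fun u v => Series_plus (fun n => fst c * fst (a n)) (fun n => - snd c * snd (a n)) u v).
  assert (E2 := fun u v => Series_plus (fun n => fst c * snd (a n)) (fun n => snd c * fst (a n)) u v).
  apply injective_projections; simpl.
  - try rewrite Series_ext with (b := fun n => fst c * fst (a n) + - snd c * snd (a n)) by (intros; simpl; ring).
    rewrite E1, Series_scal_l, (Series_scal_l (- snd c)). ring.
    apply exs_scal; auto. apply exs_scal; auto.
  - try rewrite Series_ext with (b := fun n => fst c * snd (a n) + snd c * fst (a n)) by (intros; simpl; ring).
    rewrite E2, Series_scal_l, (Series_scal_l (snd c)). ring.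
    apply exs_scal; auto. apply exs_scal; auto.
Qed.

Lemma CSeries_conj a : CSeries (fun n => Cconj (a n)) = Cconj (CSeries a).
Proof. unfold CSeries, Cconj; simpl. f_equal. apply Series_opp. Qed.

Lemma cconv_conj a : cconv a -> cconv (fun n => Cconj (a n)).
Proof. intros [H1 H2]; split; simpl; auto. apply exs_opp; auto. Qed.

Lemma ex_series_le_R (a b : nat -> R) : (forall n, Rabs (a n) <= b n) -> ex_series b -> ex_series a.
Proof. intros H Hb. apply (ex_series_le (K:=R_AbsRing) (V:=R_CompleteNormedModule) a b); auto. Qed.

Lemma cconv_abs a : ex_series (fun n => Cmod (a n)) -> cconv a.
Proof. intros H; split; eapply ex_series_le_R; try exact H; intros n.
  apply re_le_Cmod. apply Rle_trans with (2 := Rmax_Cmod (a n)). apply Rmax_r. Qed.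


Definition vplus (x y : vec) : vec := fun n => Cplus (x n) (y n).
Definition vscal (c : C) (x : vec) : vec := fun n => Cmult c (x n).
Definition vminus (x y : vec) : vec := fun n => Cminus (x n) (y n).
Definition n2 (x : vec) : R := Series (fun n => Cmod (x n) ^ 2).

Lemma Cmod2 z : Cmod z ^ 2 = fst z ^ 2 + snd z ^ 2.
Proof. unfold Cmod. rewrite pow2_sqrt; auto. nra. Qed.

Lemma Cmod2_plus_le a b : Cmod (Cplus a b) ^ 2 <= 2 * Cmod a ^ 2 + 2 * Cmod b ^ 2.
Proof. destruct a as [a1 a2], b as [b1 b2]. rewrite !Cmod2. simpl. pose proof (pow2_ge_0 (a1 - b1)); pose proof (pow2_ge_0 (a2 - b2)). nra. Qed.

Lemma Cmod2_mult a b : Cmod (Cmult a b) ^ 2 = Cmod a ^ 2 * Cmod b ^ 2.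
Proof. rewrite Cmod_mult. ring. Qed.

Lemma l2_plus x y : is_l2 x -> is_l2 y -> is_l2 (vplus x y).
Proof. unfold is_l2, vplus; intros Hx Hy.
  apply ex_series_le_R with (fun n => 2 * Cmod (x n) ^ 2 + 2 * Cmod (y n) ^ 2).
  intros n. rewrite Rabs_pos_eq by (apply pow2_ge_0). apply Cmod2_plus_le.
  apply exs_plus; apply exs_scal; auto. Qed.

Lemma l2_scal c x : is_l2 x -> is_l2 (vscal c x).
Proof. unfold is_l2, vscal; intros Hx.
  apply ex_series_ext with (fun n => Cmod c ^ 2 * Cmod (x n) ^ 2).
  intros n. rewrite Cmod2_mult; auto. apply exs_scal; auto. Qed.

Lemma vminus_eq x y : vminus x y = vplus x (vscal (RtoC (-1)) y).
Proof. apply functional_extensionality; intros n. unfold vminus, vplus, vscal. csolve. Qed.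

Lemma l2_minus x y : is_l2 x -> is_l2 y -> is_l2 (vminus x y).
Proof. intros. rewrite vminus_eq. apply l2_plus; auto. apply l2_scal; auto. Qed.

Lemma sum_n_single (f : nat -> R) i N : (forall n, n <> i -> f n = 0) ->
  sum_n f N = if Nat.leb i N then f i else 0.
Proof. intros H. induction N.
  - rewrite sum_O. destruct i; simpl; auto; try (apply H; lia).
  - rewrite sum_Sn, IHN. destruct (Nat.leb i N) eqn:E1; destruct (Nat.leb i (S N)) eqn:E2;
    apply Nat.leb_le in E1 || apply Nat.leb_gt in E1; apply Nat.leb_le in E2 || apply Nat.leb_gt in E2;
    try lia; unfold plus; simpl.
    + rewrite (H (S N)) by lia. ring.
    + assert (i = S N) by lia. subst. ring.
    + rewrite (H (S N)) by lia. ring.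
Qed.

Lemma is_series_single (f : nat -> R) i : (forall n, n <> i -> f n = 0) -> is_series f (f i).
Proof. intros H. unfold is_series. apply filterlim_ext_loc with (fun _ => f i).
  exists i. intros n Hn. symmetry. etransitivity. exact (sum_n_single f i n H). apply Nat.leb_le in Hn. rewrite Hn. auto.
  apply filterlim_const. Qed.

Lemma l2_basis i : is_l2 (basis i).
Proof. unfold is_l2. eexists. apply is_series_single with (i := i).
  intros n Hn. unfold basis. apply Nat.eqb_neq in Hn. rewrite Hn. rewrite Cmod_0. ring. Qed.

Lemma cconv_inner x y : is_l2 x -> is_l2 y -> cconv (fun n => Cmult (Cconj (x n)) (y n)).
Proof. intros Hx Hy. apply cconv_abs.
  apply ex_series_le_R with (fun n => / 2 * (Cmod (x n) ^ 2 + Cmod (y n) ^ 2)).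
  - intros n. rewrite Rabs_pos_eq by apply Cmod_ge_0. rewrite Cmod_mult, Cmod_conj.
    pose proof (Cmod_ge_0 (x n)); pose proof (Cmod_ge_0 (y n)). pose proof (pow2_ge_0 (Cmod (x n) - Cmod (y n))). nra.
  - apply exs_scal. apply exs_plus; auto.
Qed.

Lemma inner_plus_r x y z : is_l2 x -> is_l2 y -> is_l2 z ->
  inner x (vplus y z) = Cplus (inner x y) (inner x z).
Proof. intros. unfold inner, vplus. rewrite <- CSeries_plus by (apply cconv_inner; auto).
  apply CSeries_ext. intros; csolve. Qed.

Lemma inner_scal_r x c y : is_l2 x -> is_l2 y -> inner x (vscal c y) = Cmult c (inner x y).
Proof. intros. unfold inner, vscal. rewrite <- CSeries_scal by (apply cconv_inner; auto).
  apply CSeries_ext. intros; csolve. Qed.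

Lemma inner_conj x y : inner y x = Cconj (inner x y).
Proof. unfold inner. rewrite <- CSeries_conj. apply CSeries_ext. intros; csolve. Qed.

Lemma inner_plus_l x y z : is_l2 x -> is_l2 y -> is_l2 z ->
  inner (vplus y z) x = Cplus (inner y x) (inner z x).
Proof. intros. rewrite inner_conj, inner_plus_r by auto. rewrite (inner_conj y x), (inner_conj z x).
  csolve. Qed.

Lemma inner_scal_l x c y : is_l2 x -> is_l2 y -> inner (vscal c y) x = Cmult (Cconj c) (inner y x).
Proof. intros. rewrite inner_conj, inner_scal_r by auto. rewrite (inner_conj y x). csolve. Qed.

Lemma inner_minus_r x y z : is_l2 x -> is_l2 y -> is_l2 z ->
  inner x (vminus y z) = Cminus (inner x y) (inner x z).
Proof. intros. rewrite vminus_eq, inner_plus_r, inner_scal_r; auto. csolve. apply l2_scal; auto. Qed.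

Lemma inner_minus_l x y z : is_l2 x -> is_l2 y -> is_l2 z ->
  inner (vminus y z) x = Cminus (inner y x) (inner z x).
Proof. intros. rewrite vminus_eq, inner_plus_l, inner_scal_l; auto. csolve. apply l2_scal; auto. Qed.

Lemma inner_self_fst x : fst (inner x x) = n2 x.
Proof. unfold inner, n2, CSeries. cbn [fst]. apply Series_ext. intros n. rewrite Cmod2. simpl. ring. Qed.

Lemma inner_self_snd x : snd (inner x x) = 0.
Proof. unfold inner, CSeries; simpl. rewrite Series_ext with (b := fun _ => 0).
  unfold Series. rewrite Lim_seq_ext with (v := fun _ => 0). rewrite Lim_seq_const. auto.
  intros n. induction n. rewrite sum_O; auto. rewrite sum_Sn, IHn. unfold plus; simpl; ring.
  intros; simpl; ring. Qed.

Lemma Series_zero : Series (fun _ => 0) = 0.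
Proof. unfold Series. rewrite Lim_seq_ext with (v := fun _ => 0). rewrite Lim_seq_const. auto.
  intros n. induction n. rewrite sum_O; auto. rewrite sum_Sn, IHn. unfold plus; simpl; ring. Qed.

Lemma Series_ge0 (a : nat -> R) : (forall n, 0 <= a n) -> ex_series a -> 0 <= Series a.
Proof. intros H Ha. rewrite <- Series_zero. apply Series_le; auto. intros n; split; auto; lra. Qed.

Lemma Series_le' (a b : nat -> R) : (forall n, a n <= b n) -> ex_series a -> ex_series b -> Series a <= Series b.
Proof. intros H Ha Hb. assert (0 <= Series (fun n => b n - a n)).
  apply Series_ge0. intros n; specialize (H n); lra. apply exs_minus; auto.
  rewrite Series_minus in H0; auto. lra. Qed.

Lemma n2_ge0 x : is_l2 x -> 0 <= n2 x.
Proof. intros H. apply Series_ge0; auto. intros; apply pow2_ge_0. Qed.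

Lemma inner_basis i x : inner (basis i) x = x i.
Proof. unfold inner, CSeries. apply injective_projections; cbn [fst snd].
  - apply is_series_unique. 
    replace (fst (x i)) with (fst (Cmult (Cconj (basis i i)) (x i))).
    apply (is_series_single (fun n => fst (Cmult (Cconj (basis i n)) (x n))) i).
    intros n Hn. unfold basis. apply Nat.eqb_neq in Hn. rewrite Hn. simpl. ring.
    unfold basis. rewrite Nat.eqb_refl. simpl. ring.
  - apply is_series_unique. 
    replace (snd (x i)) with (snd (Cmult (Cconj (basis i i)) (x i))).
    apply (is_series_single (fun n => snd (Cmult (Cconj (basis i n)) (x n))) i).
    intros n Hn. unfold basis. apply Nat.eqb_neq in Hn. rewrite Hn. simpl. ring.
    unfold basis. rewrite Nat.eqb_refl. simpl. ring.
Qed.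

Lemma real_CS a b Z : 0 <= a -> 0 <= b -> 0 <= Z ->
  (forall t, 0 <= a + 2*t*Z + t^2*Z*b) -> Z <= a*b.
Proof. intros Ha Hb HZ H.
  destruct (Req_dec b 0) as [Hb0|Hb0].
  - subst. destruct (Req_dec Z 0) as [HZ0|HZ0]. lra.
    specialize (H (-(a+1)/(2*Z))).
    replace (a + 2 * (- (a + 1) / (2 * Z)) * Z + (- (a + 1) / (2 * Z)) ^ 2 * Z * 0) with (-1) in H by (field; auto). lra.
  - specialize (H (-1/b)).
    replace (a + 2 * (-1 / b) * Z + (-1 / b) ^ 2 * Z * b) with (a - Z/b) in H by (field; auto).
    assert (0 <= (a - Z/b) * b) by (apply Rmult_le_pos; lra).
    replace ((a - Z/b)*b) with (a*b - Z) in H0 by (field; auto). lra.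
Qed.

Lemma form_CS_alg (quu quw qwu qww : C) (F : C -> C) :
  (forall s, F s = Cplus (Cplus (Cplus quu (Cmult s quw)) (Cmult (Cconj s) qwu)) (Cmult (Cmult s (Cconj s)) qww)) ->
  qwu = Cconj quw -> (forall s, 0 <= fst (F s)) -> 0 <= fst quu -> 0 <= fst qww ->
  Cmod quw ^ 2 <= fst quu * fst qww.
Proof. intros HF Hh Hpos Ha Hb. rewrite Cmod2.
  apply real_CS; auto. nra.
  intros t. specialize (Hpos (Cmult (RtoC t) (Cconj quw))). rewrite HF, Hh in Hpos.
  destruct quu as [a1 a2], quw as [z1 z2], qww as [b1 b2]. cunfold. simpl in *. nra.
Qed.

Lemma inner_expand u w s : is_l2 u -> is_l2 w ->
  inner (vplus u (vscal s w)) (vplus u (vscal s w)) =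
  Cplus (Cplus (Cplus (inner u u) (Cmult s (inner u w))) (Cmult (Cconj s) (inner w u))) (Cmult (Cmult s (Cconj s)) (inner w w)).
Proof. intros Hu Hw. assert (Hs : is_l2 (vscal s w)) by (apply l2_scal; auto).
  assert (Hp : is_l2 (vplus u (vscal s w))) by (apply l2_plus; auto).
  rewrite inner_plus_l, !inner_plus_r, !inner_scal_l, !inner_scal_r; auto. csolve. Qed.

Lemma inner_CS u w : is_l2 u -> is_l2 w -> Cmod (inner u w) ^ 2 <= n2 u * n2 w.
Proof. intros Hu Hw. rewrite <- !inner_self_fst.
  apply (form_CS_alg _ _ (inner w u) _ (fun s => inner (vplus u (vscal s w)) (vplus u (vscal s w)))).
  - intros s. apply inner_expand; auto.
  - apply inner_conj.
  - intros s. rewrite inner_self_fst. apply n2_ge0. apply l2_plus; auto. apply l2_scal; auto.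
  - rewrite inner_self_fst. apply n2_ge0; auto.
  - rewrite inner_self_fst. apply n2_ge0; auto.
Qed.


Fixpoint Dr (n : nat) (a : nat -> R) (k : nat) : R :=
  match n with O => a k | S n' => Dr n' a k - Dr n' a (S k) end.

Fixpoint binom (n j : nat) : nat :=
  match n, j with
  | O, O => 1%nat | O, S _ => 0%nat
  | S n', O => 1%nat | S n', S j' => (binom n' j' + binom n' (S j'))%nat end.

Lemma binom_gt n j : (n < j)%nat -> binom n j = 0%nat.
Proof. revert j; induction n; intros j H; destruct j; simpl; try lia; auto.
  rewrite !IHn by lia. auto. Qed.

Lemma Cn0 n : Binomial.C n 0 = 1.
Proof. unfold Binomial.C. rewrite Nat.sub_0_r. simpl. field. apply INR_fact_neq_0. Qed.
Lemma Cnn n : Binomial.C n n = 1.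
Proof. unfold Binomial.C. rewrite Nat.sub_diag. simpl. field. apply INR_fact_neq_0. Qed.

Lemma binom_C n j : (j <= n)%nat -> INR (binom n j) = Binomial.C n j.
Proof. revert j; induction n; intros j H.
  - destruct j; [|lia]. simpl. rewrite Cn0. auto.
  - destruct j. simpl. rewrite Cn0; auto.
    simpl binom. rewrite plus_INR. destruct (Nat.eq_dec j n).
    + subst. rewrite IHn by lia. rewrite binom_gt by lia. rewrite !Cnn. simpl; ring.
    + rewrite !IHn by lia. apply pascal. lia.
Qed.

Definition cc (n j : nat) : R := (-1) ^ j * INR (binom n j).

Lemma sum_shift (f : nat -> R) n : sum_f_R0 f (S n) = f 0%nat + sum_f_R0 (fun j => f (S j)) n.
Proof. induction n. simpl. ring. rewrite tech5, IHn. simpl. ring. Qed.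

Lemma sum_lin (f g : nat -> R) (x y : R) n :
  sum_f_R0 (fun j => x * f j + y * g j) n = x * sum_f_R0 f n + y * sum_f_R0 g n.
Proof. induction n; simpl; [ring|]. rewrite IHn. ring. Qed.

Lemma Dr_binom n a k : Dr n a k = sum_f_R0 (fun j => cc n j * a (k + j)%nat) n.
Proof. revert k; induction n; intros k.
  - simpl. unfold cc; simpl. rewrite Nat.add_0_r. ring.
  - simpl Dr. rewrite !IHn. rewrite sum_shift.
    set (P := sum_f_R0 (fun j => cc n j * a (k + j)%nat) n).
    set (Q := sum_f_R0 (fun j => cc n j * a (S k + j)%nat) n).
    set (R0 := sum_f_R0 (fun j => cc n (S j) * a (k + S j)%nat) n).
    assert (F1 : R0 = P - a k).
    { assert (E2 := sum_shift (fun j => cc n j * a (k + j)%nat) n). rewrite tech5 in E2.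
      unfold cc at 2 in E2. rewrite binom_gt in E2 by lia. 
      unfold cc at 2 in E2. replace (binom n 0) with 1%nat in E2 by (destruct n; auto).
      rewrite Nat.add_0_r in E2. fold P in E2. fold R0 in E2. simpl in E2. lra. }
    assert (F2 : sum_f_R0 (fun j => cc (S n) (S j) * a (k + S j)%nat) n = R0 - Q).
    { unfold R0, Q. rewrite <- minus_sum. apply sum_eq. intros j _.
      unfold cc. simpl binom. rewrite plus_INR. replace (k + S j)%nat with (S k + j)%nat by lia.
      simpl pow. ring. }
    rewrite F2. unfold cc at 1. simpl. rewrite Nat.add_0_r. lra.
Qed.


Definition goodop (A : vec -> vec) : Prop :=
  (forall x, is_l2 x -> is_l2 (A x)) /\
  (forall x y, is_l2 x -> is_l2 y -> A (vplus x y) = vplus (A x) (A y)) /\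
  (forall c x, is_l2 x -> A (vscal c x) = vscal c (A x)) /\
  (forall x y, is_l2 x -> is_l2 y -> inner x (A y) = inner (A x) y).

Definition Bop (A : vec -> vec) (z : vec) : vec := vminus z (A z).
Definition iterA (A : vec -> vec) k y := Nat.iter k A y.
Definition vv (A : vec -> vec) (y : vec) (n k : nat) : vec := Nat.iter n (Bop A) (Nat.iter k A y).


Lemma good_l2 A : goodop A -> forall x, is_l2 x -> is_l2 (A x).
Proof. intros H; apply H. Qed.
Lemma good_plus A : goodop A -> forall x y, is_l2 x -> is_l2 y -> A (vplus x y) = vplus (A x) (A y).
Proof. intros H; apply H. Qed.
Lemma good_scal A : goodop A -> forall c x, is_l2 x -> A (vscal c x) = vscal c (A x).
Proof. intros H; apply H. Qed.
Lemma good_sym A : goodop A -> forall x y, is_l2 x -> is_l2 y -> inner x (A y) = inner (A x) y.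
Proof. intros H; apply H. Qed.

Lemma good_minus A : goodop A -> forall x y, is_l2 x -> is_l2 y -> A (vminus x y) = vminus (A x) (A y).
Proof. intros H x y Hx Hy. rewrite !vminus_eq. rewrite good_plus, good_scal; auto.
  apply l2_scal; auto. Qed.

Lemma iter_l2 (f : vec -> vec) : (forall x, is_l2 x -> is_l2 (f x)) -> forall n x, is_l2 x -> is_l2 (Nat.iter n f x).
Proof. intros H n; induction n; simpl; auto. Qed.

Lemma Bop_l2 A : goodop A -> forall x, is_l2 x -> is_l2 (Bop A x).
Proof. intros H x Hx. unfold Bop. apply l2_minus; auto. apply (good_l2 A H); auto. Qed.

Lemma Bop_good A : goodop A -> goodop (Bop A).
Proof. intros H. assert (HA := good_l2 A H). split; [|split; [|split]].
  - apply Bop_l2; auto.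
  - intros x y Hx Hy. unfold Bop. rewrite good_plus by auto. apply functional_extensionality; intros n.
    unfold vminus, vplus. csolve.
  - intros c x Hx. unfold Bop. rewrite good_scal by auto. apply functional_extensionality; intros n.
    unfold vminus, vscal. csolve.
  - intros x y Hx Hy. unfold Bop. rewrite inner_minus_r, inner_minus_l; auto.
    rewrite (good_sym A H); auto.
Qed.

Lemma iter_good (f : vec -> vec) : goodop f -> forall n, goodop (Nat.iter n f).
Proof. intros H n. induction n.
  - split; [|split; [|split]]; simpl; auto.
  - destruct IHn as [I1 [I2 [I3 I4]]]. split; [|split; [|split]]; simpl.
    + intros; apply (good_l2 f H); auto.
    + intros. rewrite I2 by auto. apply (good_plus f H); auto.
    + intros. rewrite I3 by auto. apply (good_scal f H); auto.
    + intros. rewrite (good_sym f H), I4; auto. rewrite <- Nat.iter_succ_r. reflexivity. apply (good_l2 f H); auto.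
Qed.

Lemma A_Bop_comm A : goodop A -> forall z, is_l2 z -> A (Bop A z) = Bop A (A z).
Proof. intros H z Hz. unfold Bop. rewrite good_minus; auto. apply (good_l2 A H); auto. Qed.

Lemma comm_iter (f g : vec -> vec) : (forall z, is_l2 z -> is_l2 (g z)) ->
  (forall z, is_l2 z -> f (g z) = g (f z)) -> forall n z, is_l2 z -> f (Nat.iter n g z) = Nat.iter n g (f z).
Proof. intros Hg H n. induction n; intros z Hz; simpl; auto. rewrite H. rewrite IHn; auto.
  apply iter_l2; auto. Qed.


Lemma iter_comm2 A : goodop A -> forall k n z, is_l2 z ->
  Nat.iter k A (Nat.iter n (Bop A) z) = Nat.iter n (Bop A) (Nat.iter k A z).
Proof. intros H k. assert (HA := good_l2 A H). assert (HB := Bop_l2 A H).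
  induction k; intros n z Hz; simpl; auto. rewrite IHk by auto.
  apply comm_iter; auto. intros; apply A_Bop_comm; auto. apply iter_l2; auto. Qed.

Lemma vv_l2 A : goodop A -> forall y n k, is_l2 y -> is_l2 (vv A y n k).
Proof. intros H y n k Hy. unfold vv. apply iter_l2. apply Bop_l2; auto. apply iter_l2; auto. apply (good_l2 A H). Qed.

Lemma vv_A A : goodop A -> forall y n k, is_l2 y -> A (vv A y n k) = vv A y n (S k).
Proof. intros H y n k Hy. unfold vv. rewrite comm_iter; auto. apply Bop_l2; auto.
  intros; apply A_Bop_comm; auto. apply iter_l2; auto. apply (good_l2 A H). Qed.

Lemma vv_S A : goodop A -> forall y n k, is_l2 y -> vv A y (S n) k = vminus (vv A y n k) (vv A y n (S k)).
Proof. intros H y n k Hy. rewrite <- vv_A by auto. unfold vv at 1. simpl. unfold Bop at 1. auto. Qed.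

Lemma vv_sym A : goodop A -> forall x w n k, is_l2 x -> is_l2 w -> inner (vv A x n k) w = inner x (vv A w n k).
Proof. intros H x w n k Hx Hw. unfold vv.
  assert (GB := iter_good _ (Bop_good A H) n). assert (GA := iter_good _ H k).
  rewrite <- (good_sym _ GB), <- (good_sym _ GA); auto.
  rewrite iter_comm2; auto. apply iter_l2; auto. apply Bop_l2; auto. apply iter_l2; auto. apply (good_l2 A H). Qed.

Lemma vv_comp A : goodop A -> forall y a b n k, is_l2 y -> vv A (vv A y a b) n k = vv A y (n + a) (k + b).
Proof. intros H y a b n k Hy. unfold vv. rewrite iter_comm2; auto. rewrite !Nat.iter_add. auto.
  apply iter_l2; auto. apply (good_l2 A H). Qed.

Lemma vv_pair A : goodop A -> forall y n1 k1 n2 k2, is_l2 y ->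
  inner (vv A y n1 k1) (vv A y n2 k2) = inner y (vv A y (n1 + n2) (k1 + k2)).
Proof. intros H y n1 k1 n2 k2 Hy. rewrite vv_sym; auto. rewrite vv_comp; auto. apply vv_l2; auto. Qed.

Lemma vv_Dr A : goodop A -> forall w y n k, is_l2 w -> is_l2 y ->
  fst (inner w (vv A y n k)) = Dr n (fun j => fst (inner w (Nat.iter j A y))) k.
Proof. intros H w y n. induction n; intros k Hw Hy. simpl. auto.
  rewrite vv_S by auto. rewrite inner_minus_r; auto. simpl Dr. rewrite <- !IHn by auto. simpl. ring.
  apply vv_l2; auto. apply vv_l2; auto. Qed.

Lemma vv_real A : goodop A -> forall y n k, is_l2 y -> snd (inner y (vv A y n k)) = 0.
Proof. intros H y n k Hy. assert (E := vv_sym A H y y n k Hy Hy). rewrite inner_conj in E.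
  destruct (inner y (vv A y n k)) as [a b]. unfold Cconj in E. simpl in *. inversion E. lra. Qed.


Lemma series_lim (a : nat -> R) : ex_series a -> is_lim_seq (fun N => sum_f_R0 a N) (Series a).
Proof. intros H. apply Series_correct in H. eapply is_lim_seq_ext; [|exact H].
  intros n. apply sum_n_Reals. Qed.

Lemma partial_le_Series (a : nat -> R) N : (forall n, 0 <= a n) -> ex_series a -> sum_f_R0 a N <= Series a.
Proof. intros H Ha. apply (is_lim_seq_incr_compare (fun N => sum_f_R0 a N)).
  apply series_lim; auto. intros n. simpl. specialize (H (S n)). lra. Qed.

Lemma bounded_series (a : nat -> R) B : (forall n, 0 <= a n) -> (forall N, sum_f_R0 a N <= B) ->
  ex_series a /\ Series a <= B.
Proof. intros H HB.
  assert (E : ex_finite_lim_seq (fun N => sum_f_R0 a N)).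
  { apply ex_finite_lim_seq_incr with B; auto. intros n; simpl; specialize (H (S n)); lra. }
  destruct E as [l Hl].
  assert (Hs : is_series a l). { unfold is_series. eapply filterlim_ext; [|exact Hl]. intros n; simpl. symmetry; apply sum_n_Reals. }
  split. exists l; auto. rewrite (is_series_unique _ _ Hs).
  apply (is_lim_seq_le (fun N => sum_f_R0 a N) (fun _ => B) l B); auto. apply is_lim_seq_const. Qed.

Lemma Series_sum (f : nat -> nat -> R) (c : nat -> R) n : (forall k, ex_series (f k)) ->
  ex_series (fun i => sum_f_R0 (fun k => c k * f k i) n) /\
  Series (fun i => sum_f_R0 (fun k => c k * f k i) n) = sum_f_R0 (fun k => c k * Series (f k)) n.
Proof. intros H. induction n; simpl.
  - split. apply exs_scal; auto. apply Series_scal_l.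
  - destruct IHn as [E1 E2]. split. apply exs_plus; auto. apply exs_scal; auto.
    rewrite Series_plus; auto. rewrite E2, Series_scal_l. auto. apply exs_scal; auto. Qed.

Lemma tail_lim (a : nat -> R) : ex_series a -> forall eps, 0 < eps -> exists N, forall n, (N <= n)%nat ->
  Rabs (Series a - sum_f_R0 a n) < eps.
Proof. intros H eps Heps. assert (L := series_lim a H). apply is_lim_seq_spec in L.
  destruct (L (mkposreal eps Heps)) as [N HN]. exists N. intros n Hn. specialize (HN n Hn). simpl in HN.
  rewrite Rabs_minus_sym. auto. Qed.

Fixpoint csum (f : nat -> C) (N : nat) : C :=
  match N with O => f O | S N' => Cplus (csum f N') (f (S N')) end.

Lemma csum_fst f N : fst (csum f N) = sum_f_R0 (fun i => fst (f i)) N.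
Proof. induction N; simpl; auto. rewrite IHN; auto. Qed.
Lemma csum_snd f N : snd (csum f N) = sum_f_R0 (fun i => snd (f i)) N.
Proof. induction N; simpl; auto. rewrite IHN; auto. Qed.

Lemma sum_n_csum (f : nat -> C) N : sum_n f N = csum f N.
Proof. apply injective_projections. rewrite sum_n_fst, csum_fst, sum_n_Reals. auto.
  rewrite sum_n_snd, csum_snd, sum_n_Reals. auto. Qed.

Lemma cconv_csum (F : nat -> nat -> C) N : (forall i, cconv (F i)) -> cconv (fun j => csum (fun i => F i j) N).
Proof. intros H. induction N; simpl; auto. apply cconv_plus; auto. Qed.

Lemma CSeries_csum (F : nat -> nat -> C) N : (forall i, cconv (F i)) ->
  CSeries (fun j => csum (fun i => F i j) N) = csum (fun i => CSeries (F i)) N.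
Proof. intros H. induction N; simpl; auto. rewrite CSeries_plus; auto. rewrite IHN; auto.
  apply cconv_csum; auto. Qed.

Lemma sum_single_support (f : nat -> R) N : (forall n, (N < n)%nat -> f n = 0) -> is_series f (sum_f_R0 f N).
Proof. intros H. unfold is_series. apply filterlim_ext_loc with (fun _ => sum_f_R0 f N).
  exists N. intros n Hn. rewrite sum_n_Reals. induction Hn; auto. simpl. rewrite <- IHHn. rewrite H by lia. ring.
  apply filterlim_const. Qed.

Lemma CSeries_finite (f : nat -> C) N : (forall n, (N < n)%nat -> f n = RtoC 0) -> CSeries f = csum f N /\ cconv f.
Proof. intros H. apply is_series_CSeries. apply is_series_C. rewrite csum_fst, csum_snd. split;
  apply sum_single_support; intros n Hn; rewrite H; auto. Qed.

Lemma exs_ext (a b : nat -> R) : (forall n, a n = b n) -> ex_series a -> ex_series b.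
Proof. intros H Ha. exact (ex_series_ext (K:=R_AbsRing) (V:=R_NormedModule) a b H Ha). Qed.


Definition matA (A : vec -> vec) (M : nat -> nat -> C) : Prop :=
  (forall w, is_l2 w -> forall i, A w i = CSeries (fun l => Cmult (M i l) (w l))) /\
  (forall i j, A (basis j) i = M i j).

Lemma mpowS_iter A M : goodop A -> matA A M -> forall k i j, mpowS M k i j = Nat.iter (S k) A (basis j) i.
Proof. intros H [H1 H2] k. induction k; intros i j.
  - simpl. rewrite H2; auto.
  - simpl mpowS. change (Nat.iter (S (S k)) A (basis j)) with (A (Nat.iter (S k) A (basis j))).
    rewrite H1. unfold mprod. apply CSeries_ext. intros l. rewrite IHk. auto.
    apply iter_l2. apply (good_l2 A H). apply l2_basis. Qed.

Lemma trace_decomp A M (tr : nat -> C) : goodop A -> matA A M ->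
  (forall k, is_series (fun i => mpowS M k i i) (tr k)) ->
  forall n, ex_series (fun i => fst (inner (basis i) (vv A (basis i) n 1))) /\
    fst (sum_n (fun k => Cmult (RtoC ((-1) ^ k * Binomial.C n k)) (tr k)) n) =
    Series (fun i => fst (inner (basis i) (vv A (basis i) n 1))).
Proof. intros H HM Htr n.
  set (b := fun k i => fst (inner (basis i) (Nat.iter (S k) A (basis i)))).
  assert (Hb : forall k, ex_series (b k) /\ fst (tr k) = Series (b k)).
  { intros k. destruct (is_series_CSeries _ _ (Htr k)) as [E [C1 C2]]. split.
    - eapply ex_series_ext; [|exact C1]. intros i; simpl. unfold b. rewrite inner_basis.
      rewrite (mpowS_iter A M H HM). auto.
    - rewrite <- E. unfold CSeries. simpl. apply Series_ext. intros i. unfold b. rewrite inner_basis.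
      rewrite (mpowS_iter A M H HM). auto. }
  destruct (Series_sum b (fun k => (-1) ^ k * Binomial.C n k) n) as [S1 S2].
  { intros k; apply Hb. }
  assert (Eterm : forall i, sum_f_R0 (fun k => (-1) ^ k * Binomial.C n k * b k i) n =
      fst (inner (basis i) (vv A (basis i) n 1))).
  { intros i. rewrite (vv_Dr A H) by apply l2_basis. rewrite Dr_binom. apply sum_eq. intros j Hj.
    unfold cc. rewrite binom_C by lia. unfold b. reflexivity. }
  split.
  - exact (exs_ext _ _ Eterm S1).
  - rewrite <- (Series_ext _ _ Eterm), S2. rewrite sum_n_fst, sum_n_Reals. apply sum_eq. intros k _.
    destruct (Hb k) as [_ E]. rewrite <- E. unfold Cmult, RtoC. cbn [fst snd]. ring.
Qed.


Lemma dens_good A : density_operator A -> goodop A.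
Proof. intros [H1 [H2 [H3 [H4 _]]]]. split; [|split; [|split]]; auto. Qed.

Lemma dens_pos A : density_operator A -> forall x, is_l2 x -> 0 <= fst (inner x (A x)).
Proof. intros [_ [_ [_ [_ [H _]]]]]; auto. Qed.

Lemma qCS A : goodop A -> (forall x, is_l2 x -> 0 <= fst (inner x (A x))) ->
  forall u w, is_l2 u -> is_l2 w -> Cmod (inner u (A w)) ^ 2 <= fst (inner u (A u)) * fst (inner w (A w)).
Proof. intros H Hp u w Hu Hw. assert (HA := good_l2 A H).
  apply (form_CS_alg _ _ (inner w (A u)) _ (fun s => inner (vplus u (vscal s w)) (A (vplus u (vscal s w))))).
  - intros s. assert (Hs : is_l2 (vscal s w)) by (apply l2_scal; auto).
    rewrite (good_plus A H), (good_scal A H); auto.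
    assert (HAu := HA u Hu). assert (HAw := HA w Hw). assert (Hs2 : is_l2 (vscal s (A w))) by (apply l2_scal; auto).
    rewrite inner_plus_l, !inner_plus_r, !inner_scal_l, !inner_scal_r; auto; try (apply l2_plus; auto).
    csolve.
  - rewrite (good_sym A H), inner_conj; auto.
  - intros s. apply Hp. apply l2_plus; auto. apply l2_scal; auto.
  - apply Hp; auto.
  - apply Hp; auto.
Qed.

Lemma fst_le_Cmod z : fst z <= Cmod z.
Proof. apply Rle_trans with (Rabs (fst z)). apply Rle_abs. apply re_le_Cmod. Qed.
Lemma fst2_le_Cmod2 z : fst z ^ 2 <= Cmod z ^ 2.
Proof. rewrite Cmod2. pose proof (pow2_ge_0 (snd z)). lra. Qed.

Lemma n2_inner x : n2 x = fst (inner x x).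
Proof. rewrite inner_self_fst; auto. Qed.

Lemma pos_ab A : goodop A -> (forall x, is_l2 x -> 0 <= fst (inner x (A x))) ->
  (forall x, is_l2 x -> n2 (A x) <= n2 x) ->
  forall z, is_l2 z -> n2 (A z) <= fst (inner z (A z)) /\ fst (inner z (A z)) <= n2 z.
Proof. intros H Hp Hn z Hz. assert (HA := good_l2 A H).
  set (p := fst (inner z (A z))). set (m := n2 (A z)).
  assert (Hp0 : 0 <= p) by (apply Hp; auto).
  assert (Hm0 : 0 <= m) by (apply n2_ge0; auto).
  assert (Hr : fst (inner (A z) (A (A z))) <= m).
  { set (r := fst (inner (A z) (A (A z)))).
    assert (r ^ 2 <= m * m).
    { apply Rle_trans with (Cmod (inner (A z) (A (A z))) ^ 2). apply fst2_le_Cmod2.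
      apply Rle_trans with (n2 (A z) * n2 (A (A z))). apply inner_CS; auto.
      apply Rmult_le_compat_l; auto. }
    assert (0 <= r) by (apply Hp; auto). nra. }
  assert (Hb : m * m <= p * m).
  { assert (E : fst (inner z (A (A z))) = m). { rewrite (good_sym A H); auto. rewrite <- n2_inner; auto. }
    assert (C1 := qCS A H Hp z (A z) Hz (HA z Hz)). fold p in C1.
    assert (C2 := fst2_le_Cmod2 (inner z (A (A z)))). rewrite E in C2.
    assert (0 <= fst (inner (A z) (A (A z)))) by (apply Hp; auto). nra. }
  assert (Hmp : m <= p) by nra.
  split; auto.
  assert (p ^ 2 <= n2 z * m).
  { apply Rle_trans with (Cmod (inner z (A z)) ^ 2). apply fst2_le_Cmod2. apply inner_CS; auto. }
  pose proof (n2_ge0 z Hz). nra.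
Qed.

Lemma vv_pos A : goodop A -> (forall x, is_l2 x -> 0 <= fst (inner x (A x))) ->
  (forall x, is_l2 x -> n2 (A x) <= n2 x) ->
  forall y n k, is_l2 y -> 0 <= fst (inner y (vv A y n k)).
Proof. intros H Hp Hn y n k Hy. assert (HA := good_l2 A H).
  destruct (Nat.Even_or_Odd n) as [[p Ep]|[p Ep]]; destruct (Nat.Even_or_Odd k) as [[q Eq]|[q Eq]]; subst.
  - replace (2 * p)%nat with (p + p)%nat by lia. replace (2 * q)%nat with (q + q)%nat by lia.
    rewrite <- vv_pair by auto. rewrite <- n2_inner. apply n2_ge0. apply vv_l2; auto.
  - replace (2 * p)%nat with (p + p)%nat by lia. replace (2 * q + 1)%nat with (q + S q)%nat by lia.
    rewrite <- vv_pair by auto. rewrite <- vv_A by auto. apply Hp. apply vv_l2; auto.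
  - replace (2 * p + 1)%nat with (p + S p)%nat by lia. replace (2 * q)%nat with (q + q)%nat by lia.
    rewrite <- vv_pair by auto. rewrite vv_S, <- vv_A by auto.
    assert (Hz := vv_l2 A H y p q Hy). rewrite inner_minus_r; auto. unfold Cminus, Cplus, Copp; cbn [fst].
    rewrite <- n2_inner. destruct (pos_ab A H Hp Hn _ Hz). lra.
  - replace (2 * p + 1)%nat with (p + S p)%nat by lia. replace (2 * q + 1)%nat with (q + S q)%nat by lia.
    rewrite <- vv_pair by auto. rewrite vv_S, <- !vv_A by auto.
    assert (Hz := vv_l2 A H y p q Hy). rewrite inner_minus_r; auto. unfold Cminus, Cplus, Copp; cbn [fst].
    rewrite (good_sym A H (vv A y p q) (A (vv A y p q))); auto. rewrite <- n2_inner. destruct (pos_ab A H Hp Hn _ Hz). lra.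
Qed.


Lemma exs_le (a b : nat -> R) : (forall n, 0 <= a n <= b n) -> ex_series b -> ex_series a.
Proof. intros H Hb. apply ex_series_le_R with b; auto. intros n. rewrite Rabs_pos_eq; apply H. Qed.

Lemma finite_lim (g : nat -> nat -> R) K : (forall i, is_lim_seq (fun n => g n i) 0) ->
  is_lim_seq (fun n => sum_f_R0 (g n) K) 0.
Proof. intros H. induction K; simpl. apply H.
  replace 0 with (0 + 0) by ring. apply is_lim_seq_plus'; auto. Qed.

Lemma tannery (g : nat -> nat -> R) (d : nat -> R) : (forall n i, 0 <= g n i <= d i) -> ex_series d ->
  (forall i, is_lim_seq (fun n => g n i) 0) -> is_lim_seq (fun n => Series (g n)) 0.
Proof. intros H Hd Hl. apply is_lim_seq_spec. intros eps.
  assert (He : 0 < eps / 2) by (destruct eps; simpl; lra).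
  destruct (tail_lim d Hd (eps/2) He) as [K HK]. specialize (HK K (le_n K)).
  assert (F := finite_lim g K Hl). apply is_lim_seq_spec in F. destruct (F (mkposreal _ He)) as [N HN].
  exists N. intros n Hn. specialize (HN n Hn). simpl in HN.
  assert (Hg : ex_series (g n)) by (apply exs_le with d; auto).
  assert (T : sum_f_R0 (fun i => d i - g n i) K <= Series (fun i => d i - g n i)).
  { apply partial_le_Series. intros i; specialize (H n i); lra. apply exs_minus; auto. }
  rewrite minus_sum, Series_minus in T; auto.
  assert (0 <= Series (g n)) by (apply Series_ge0; auto; intros i; apply H).
  assert (0 <= sum_f_R0 (g n) K). { apply cond_pos_sum. intros; apply H. }
  apply Rabs_def2 in HN. apply Rabs_def2 in HK. rewrite Rminus_0_r in *.
  rewrite Rabs_pos_eq by lra. lra.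
Qed.



Lemma fwd_herm A M : goodop A -> (forall i j, inner (basis i) (A (basis j)) = M i j) ->
  forall i j, M i j = Cconj (M j i).
Proof. intros H HM i j. rewrite <- !HM. rewrite (good_sym A H) by apply l2_basis. apply inner_conj. Qed.

Lemma fwd_matA A M : goodop A -> (forall i j, inner (basis i) (A (basis j)) = M i j) -> matA A M.
Proof. intros H HM. split.
  - intros w Hw i. rewrite <- (inner_basis i (A w)). rewrite (good_sym A H) by (auto; apply l2_basis).
    unfold inner. apply CSeries_ext. intros l. f_equal. rewrite <- (inner_basis l (A (basis i))), HM.
    rewrite (fwd_herm A M H HM i l). unfold Cconj; destruct (M l i); simpl. f_equal; ring.
  - intros i j. rewrite <- (inner_basis i (A (basis j))). apply HM.
Qed.

Lemma fwd_normbound A M : goodop A -> (forall x, is_l2 x -> 0 <= fst (inner x (A x))) ->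
  (forall i j, inner (basis i) (A (basis j)) = M i j) ->
  is_series (fun i => fst (M i i)) 1 ->
  forall x, is_l2 x -> n2 (A x) <= n2 x.
Proof. intros H Hp HM Htr x Hx. assert (HA := good_l2 A H).
  set (d := fun i => fst (M i i)).
  assert (Hd0 : forall i, 0 <= d i). { intros i; unfold d; rewrite <- HM. apply Hp, l2_basis. }
  assert (Hdex : ex_series d) by (exists 1; auto).
  assert (Hd1 : Series d = 1) by (apply is_series_unique; auto).
  assert (C1 : forall i l, Cmod (M i l) ^ 2 <= d i * d l).
  { intros i l. unfold d. rewrite <- !HM. apply qCS; auto; apply l2_basis. }
  assert (C2 : forall l, n2 (A (basis l)) <= d l).
  { intros l. unfold n2. rewrite <- (Rmult_1_l (d l)). rewrite <- Hd1, <- Series_scal_r.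
    apply Series_le. intros i. split. apply pow2_ge_0. rewrite <- (inner_basis i (A (basis l))), HM. apply C1.
    apply ex_series_scal_r; auto. }
  assert (C3 : forall l, Cmod (A x l) ^ 2 <= d l * n2 x).
  { intros l. rewrite <- (inner_basis l (A x)), (good_sym A H) by (auto; apply l2_basis).
    apply Rle_trans with (n2 (A (basis l)) * n2 x). apply inner_CS; auto. apply HA, l2_basis.
    apply Rmult_le_compat_r. apply n2_ge0; auto. auto. }
  unfold n2 at 1. rewrite <- (Rmult_1_l (n2 x)), <- Hd1, <- Series_scal_r.
  apply Series_le. intros l; split. apply pow2_ge_0. apply C3. apply ex_series_scal_r; auto.
Qed.

Lemma fwd_i A M : goodop A -> (forall x, is_l2 x -> 0 <= fst (inner x (A x))) ->
  (forall i j, inner (basis i) (A (basis j)) = M i j) ->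
  is_series (fun i => fst (M i i)) 1 ->
  forall N, sum_n (fun i => sum_n (fun j => (Cmod (M i j)) ^ 2) N) N <= 1.
Proof. intros H Hp HM Htr N.
  set (d := fun i => fst (M i i)).
  assert (Hd0 : forall i, 0 <= d i). { intros i; unfold d; rewrite <- HM. apply Hp, l2_basis. }
  assert (Hdex : ex_series d) by (exists 1; auto).
  assert (Hd1 : Series d = 1) by (apply is_series_unique; auto).
  assert (C1 : forall i l, Cmod (M i l) ^ 2 <= d i * d l).
  { intros i l. unfold d. rewrite <- !HM. apply qCS; auto; apply l2_basis. }
  assert (S1 : sum_f_R0 d N <= 1) by (rewrite <- Hd1; apply partial_le_Series; auto).
  assert (S0 : 0 <= sum_f_R0 d N) by (apply cond_pos_sum; auto).
  rewrite sum_n_Reals. rewrite (sum_eq _ (fun i => sum_f_R0 (fun j => Cmod (M i j) ^ 2) N)).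
  2: { intros i _. apply sum_n_Reals. }
  apply Rle_trans with (sum_f_R0 (fun i => d i * sum_f_R0 d N) N).
  - apply sum_Rle. intros i _. rewrite scal_sum. apply sum_Rle. intros j _. rewrite Rmult_comm. apply C1.
  - rewrite <- scal_sum. nra.
Qed.


Lemma vv_fst_S A : goodop A -> forall y n k, is_l2 y ->
  fst (inner y (vv A y (S n) k)) = fst (inner y (vv A y n k)) - fst (inner y (vv A y n (S k))).
Proof. intros H y n k Hy. rewrite vv_S by auto. rewrite inner_minus_r; auto; try (apply vv_l2; auto).
  all: try (unfold Cminus, Cplus, Copp; cbn [fst]; ring). Qed.

Lemma vv_bound A : goodop A -> (forall x, is_l2 x -> 0 <= fst (inner x (A x))) ->
  (forall x, is_l2 x -> n2 (A x) <= n2 x) ->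
  forall y n k, is_l2 y -> fst (inner y (vv A y n (S k))) <= fst (inner y (vv A y 0 1)).
Proof. intros H Hp Hn y n k Hy.
  assert (P := vv_pos A H Hp Hn y).
  assert (Hmn : forall n k, fst (inner y (vv A y n k)) <= fst (inner y (vv A y 0 k))).
  { intros n0 k0. induction n0. lra. rewrite vv_fst_S by auto. specialize (P n0 (S k0) Hy). lra. }
  assert (Hmk : forall k, fst (inner y (vv A y 0 (S k))) <= fst (inner y (vv A y 0 1))).
  { induction k0. lra. assert (E := vv_fst_S A H y 0 (S k0) Hy). specialize (P 1%nat (S k0) Hy). lra. }
  specialize (Hmn n (S k)). specialize (Hmk k). lra.
Qed.

Lemma fwd_iii A M : density_operator A -> (forall i j, inner (basis i) (A (basis j)) = M i j) ->
  exists tr : nat -> C,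
       (forall k : nat, is_series (fun i => mpowS M k i i) (tr k)) /\
       filterlim
         (fun n : nat =>
            sum_n (fun k => Cmult (RtoC ((-1) ^ k * Binomial.C n k)) (tr k)) n)
         eventually (locally (RtoC 0)).
Proof. intros HD HM. assert (H := dens_good A HD). assert (Hp := dens_pos A HD).
  assert (Htr : is_series (fun i => M i i) (RtoC 1)).
  { destruct HD as [_ [_ [_ [_ [_ T]]]]]. eapply is_series_ext; [|exact T]. intros i; apply HM. }
  apply is_series_C in Htr as [Htr1 _]. simpl in Htr1.
  assert (Hn := fwd_normbound A M H Hp HM Htr1).
  assert (HmA := fwd_matA A M H HM).
  set (d := fun i => fst (M i i)).
  assert (Hdex : ex_series d) by (exists 1; auto).
  assert (Hd : forall i, d i = fst (inner (basis i) (vv A (basis i) 0 1))).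
  { intros i. unfold d. rewrite <- HM. reflexivity. }
  assert (P := fun i => vv_pos A H Hp Hn (basis i)).
  assert (Bd := fun i => vv_bound A H Hp Hn (basis i)).
  set (b := fun k i => fst (inner (basis i) (vv A (basis i) 0 (S k)))).
  assert (Hb : forall k, ex_series (b k)).
  { intros k. apply exs_le with d; auto. intros i. unfold b. split. apply P, l2_basis.
    rewrite Hd. apply Bd, l2_basis. }
  assert (Htrk : forall k, is_series (fun i => mpowS M k i i) ((fun k => (Series (b k), 0)) k)).
  { intros k. apply is_series_C. cbn [fst snd]. split.
    + eapply is_series_ext; [|apply Series_correct; apply Hb]. intros i. unfold b.
      rewrite (mpowS_iter A M H HmA). rewrite <- inner_basis. reflexivity.
    + eapply is_series_ext; [|apply (is_series_single (fun _ => 0) 0)].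
      intros i. rewrite (mpowS_iter A M H HmA). rewrite <- inner_basis. symmetry.
      apply (vv_real A H (basis i) 0 (S k)), l2_basis. auto. }
  exists (fun k => (Series (b k), 0)). split; [exact Htrk|].
  apply C_lim_split. cbn [fst snd]. split.
  - eapply is_lim_seq_ext.
    { intros n. symmetry. apply (trace_decomp A M _ H HmA Htrk n). }
    apply tannery with d; auto.
    + intros n i. split. apply P, l2_basis. rewrite Hd. apply Bd, l2_basis.
    + intros i. apply ex_series_lim_0.
      set (h := fun n => fst (inner (basis i) (vv A (basis i) n 0))).
      eapply proj1. apply (bounded_series _ (h 0%nat) (fun n => P i n 1%nat (l2_basis i))).
      intros N. assert (E : forall N, sum_f_R0 (fun n => fst (inner (basis i) (vv A (basis i) n 1))) N = h 0%nat - h (S N)).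
      { induction N0.
        - cbn [sum_f_R0]. unfold h. rewrite (vv_fst_S A H (basis i) 0 0) by apply l2_basis. ring.
        - rewrite tech5, IHN0. unfold h. rewrite (vv_fst_S A H (basis i) (S N0) 0) by apply l2_basis. ring. }
      rewrite E. assert (0 <= h (S N)) by (apply P, l2_basis). lra.
  - eapply is_lim_seq_ext; [|apply is_lim_seq_const].
    intros n. cbv beta. rewrite sum_n_snd, sum_n_Reals, (sum_eq _ (fun _ => 0)). rewrite sum_cte. unfold RtoC; cbn [snd]. ring.
    intros k _. unfold Cmult, RtoC; cbn [fst snd]. ring.
Qed.


Definition Aop (M : nat -> nat -> C) (x : vec) : vec := fun i => CSeries (fun j => Cmult (M i j) (x j)).
Definition row (M : nat -> nat -> C) (i : nat) : vec := fun j => Cconj (M i j).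

Lemma sum_mono (f : nat -> R) N K : (forall n, 0 <= f n) -> (N <= K)%nat -> sum_f_R0 f N <= sum_f_R0 f K.
Proof. intros H HK. induction HK. lra. rewrite tech5. specialize (H (S m)). lra. Qed.

Lemma sum_swap (f : nat -> nat -> R) N J :
  sum_f_R0 (fun j => sum_f_R0 (fun i => f i j) N) J = sum_f_R0 (fun i => sum_f_R0 (fun j => f i j) J) N.
Proof. induction J. simpl. auto. rewrite tech5, IHJ. simpl sum_f_R0 at 3.
  rewrite <- plus_sum. auto. Qed.

Lemma sum_nonneg (f : nat -> R) N : (forall n, 0 <= f n) -> 0 <= sum_f_R0 f N.
Proof. intros; apply cond_pos_sum; auto. Qed.

Lemma rows_bound (M : nat -> nat -> C) :
  (forall N, sum_n (fun i => sum_n (fun j => (Cmod (M i j)) ^ 2) N) N <= 1) ->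
  (forall i, ex_series (fun j => Cmod (M i j) ^ 2)) /\
  ex_series (fun i => Series (fun j => Cmod (M i j) ^ 2)) /\
  Series (fun i => Series (fun j => Cmod (M i j) ^ 2)) <= 1.
Proof. intros H.
  set (f := fun i j => Cmod (M i j) ^ 2).
  assert (Hf : forall i j, 0 <= f i j) by (intros; apply pow2_ge_0).
  assert (H2 : forall N J, sum_f_R0 (fun i => sum_f_R0 (f i) J) N <= 1).
  { intros N J. set (K := max N J). specialize (H K).
    rewrite sum_n_Reals, (sum_eq _ (fun i => sum_f_R0 (f i) K)) in H by (intros; apply sum_n_Reals).
    apply Rle_trans with (sum_f_R0 (fun i => sum_f_R0 (f i) K) N).
    apply sum_Rle. intros i _. apply sum_mono; auto. lia.
    apply Rle_trans with (sum_f_R0 (fun i => sum_f_R0 (f i) K) K); auto.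
    apply sum_mono. intros; apply sum_nonneg; auto. lia. }
  assert (Hrow : forall i, ex_series (f i)).
  { intros i. apply (bounded_series (f i) 1); auto. intros J.
    apply Rle_trans with (sum_f_R0 (fun i0 => sum_f_R0 (f i0) J) i); auto.
    destruct i. simpl; lra. rewrite tech5. pose proof (sum_nonneg (fun i0 => sum_f_R0 (f i0) J) i (fun n => sum_nonneg _ J (Hf n))). lra. }
  assert (Hp : forall N, sum_f_R0 (fun i => Series (f i)) N <= 1).
  { intros N. destruct (Series_sum f (fun _ => 1) N Hrow) as [E1 E2].
    rewrite (sum_eq _ (fun k => 1 * Series (f k))) by (intros; ring). rewrite <- E2.
    apply (bounded_series _ 1). intros j. apply sum_nonneg. intros; rewrite Rmult_1_l; auto.
    intros J. rewrite (sum_eq _ (fun j => sum_f_R0 (fun i => f i j) N)).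
    rewrite sum_swap. auto. intros j _. apply sum_eq. intros; ring. }
  destruct (bounded_series (fun i => Series (f i)) 1) as [B1 B2]; auto.
  intros i. apply Series_ge0; auto.
Qed.

Lemma row_l2 M i : ex_series (fun j => Cmod (M i j) ^ 2) -> is_l2 (row M i).
Proof. intros H. unfold is_l2, row. eapply exs_ext; [|exact H]. intros j. rewrite Cmod_conj. auto. Qed.

Lemma row_n2 M i : n2 (row M i) = Series (fun j => Cmod (M i j) ^ 2).
Proof. unfold n2, row. apply Series_ext. intros j. rewrite Cmod_conj. auto. Qed.

Lemma Aop_row M x i : Aop M x i = inner (row M i) x.
Proof. unfold Aop, inner, row. apply CSeries_ext. intros j. f_equal. unfold Cconj; destruct (M i j); simpl. f_equal; ring. Qed.

Lemma Aop_bound M : (forall N, sum_n (fun i => sum_n (fun j => (Cmod (M i j)) ^ 2) N) N <= 1) ->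
  forall x, is_l2 x -> is_l2 (Aop M x) /\ n2 (Aop M x) <= n2 x.
Proof. intros H x Hx. destruct (rows_bound M H) as [R1 [R2 R3]].
  assert (Hb : forall i, Cmod (Aop M x i) ^ 2 <= Series (fun j => Cmod (M i j) ^ 2) * n2 x).
  { intros i. rewrite Aop_row, <- row_n2. apply inner_CS; auto. apply row_l2; auto. }
  assert (Hex : ex_series (fun i => Series (fun j => Cmod (M i j) ^ 2) * n2 x)) by (apply ex_series_scal_r; auto).
  assert (L : is_l2 (Aop M x)).
  { unfold is_l2. apply exs_le with (fun i => Series (fun j => Cmod (M i j) ^ 2) * n2 x); auto.
    intros i; split; auto. apply pow2_ge_0. }
  split; auto. unfold n2 at 1.
  apply Rle_trans with (Series (fun i => Series (fun j => Cmod (M i j) ^ 2) * n2 x)).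
  apply Series_le; auto. intros i; split; auto. apply pow2_ge_0.
  rewrite Series_scal_r. pose proof (n2_ge0 x Hx). nra.
Qed.

Lemma Aop_plus M : (forall N, sum_n (fun i => sum_n (fun j => (Cmod (M i j)) ^ 2) N) N <= 1) ->
  forall x y, is_l2 x -> is_l2 y -> Aop M (vplus x y) = vplus (Aop M x) (Aop M y).
Proof. intros H x y Hx Hy. destruct (rows_bound M H) as [R1 _].
  apply functional_extensionality; intros i. unfold vplus at 2. rewrite !Aop_row.
  apply inner_plus_r; auto. apply row_l2; auto. Qed.

Lemma Aop_scal M : (forall N, sum_n (fun i => sum_n (fun j => (Cmod (M i j)) ^ 2) N) N <= 1) ->
  forall c x, is_l2 x -> Aop M (vscal c x) = vscal c (Aop M x).
Proof. intros H c x Hx. destruct (rows_bound M H) as [R1 _].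
  apply functional_extensionality; intros i. unfold vscal at 2. rewrite !Aop_row.
  apply inner_scal_r; auto. apply row_l2; auto. Qed.

Lemma Aop_basis M j i : Aop M (basis j) i = M i j.
Proof. unfold Aop.
  assert (Hz : forall n, (j < n)%nat -> Cmult (M i n) (basis j n) = RtoC 0).
  { intros n Hn. unfold basis. destruct (Nat.eqb n j) eqn:E. apply Nat.eqb_eq in E; lia. csolve. }
  destruct (CSeries_finite _ j Hz) as [E _]. rewrite E.
  assert (F : forall N, (N < j)%nat -> csum (fun n => Cmult (M i n) (basis j n)) N = RtoC 0).
  { induction N; intros HN; simpl.
    - unfold basis. destruct j; [lia|]. simpl. csolve.
    - rewrite IHN by lia. unfold basis. destruct (Nat.eqb (S N) j) eqn:E2. apply Nat.eqb_eq in E2; lia. csolve. }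
  destruct j.
  - simpl. unfold basis. simpl. csolve.
  - simpl. rewrite F by lia. unfold basis. rewrite Nat.eqb_refl. csolve.
Qed.


Definition trunc (N : nat) (x : vec) : vec := fun i => if Nat.leb i N then x i else RtoC 0.

Lemma trunc_l2 N x : is_l2 x -> is_l2 (trunc N x).
Proof. intros H. unfold is_l2. apply exs_le with (fun n => Cmod (x n) ^ 2); auto.
  intros n. unfold trunc. destruct (Nat.leb n N). split; [apply pow2_ge_0|lra].
  rewrite Cmod_0, pow_i by lia. split; [lra|apply pow2_ge_0]. Qed.

Lemma trunc_tail N x : is_l2 x -> n2 (vminus x (trunc N x)) = n2 x - sum_f_R0 (fun i => Cmod (x i) ^ 2) N.
Proof. intros H. unfold n2.
  set (g := fun i => if Nat.leb i N then Cmod (x i) ^ 2 else 0).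
  assert (Hg : is_series g (sum_f_R0 (fun i => Cmod (x i) ^ 2) N)).
  { replace (sum_f_R0 (fun i => Cmod (x i) ^ 2) N) with (sum_f_R0 g N).
    apply sum_single_support. intros n Hn. unfold g. destruct (Nat.leb n N) eqn:E; auto. apply Nat.leb_le in E; lia.
    apply sum_eq. intros i Hi. unfold g. apply Nat.leb_le in Hi. rewrite Hi. auto. }
  rewrite <- (is_series_unique _ _ Hg), <- Series_minus; auto. apply Series_ext. intros i.
  unfold vminus, trunc, g. destruct (Nat.leb i N).
  - replace (Cminus (x i) (x i)) with (RtoC 0) by csolve. rewrite Cmod_0. simpl; ring.
  - replace (Cminus (x i) (RtoC 0)) with (x i) by csolve. ring.
  - exists (sum_f_R0 (fun i => Cmod (x i) ^ 2) N); auto.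
Qed.

Lemma trunc_small x : is_l2 x -> forall eps, 0 < eps -> exists N, n2 (vminus x (trunc N x)) < eps.
Proof. intros H eps He. destruct (tail_lim _ H eps He) as [N HN]. exists N. specialize (HN N (le_n N)).
  rewrite trunc_tail; auto. unfold n2. apply Rabs_def2 in HN. lra. Qed.

Lemma csum_ext_loc f g N : (forall i, (i <= N)%nat -> f i = g i) -> csum f N = csum g N.
Proof. intros H. induction N; simpl. apply H; lia. rewrite IHN, H; auto. Qed.

Lemma csum_conj f N : Cconj (csum f N) = csum (fun i => Cconj (f i)) N.
Proof. induction N; simpl; auto. rewrite <- IHN. csolve. Qed.

Lemma csum_mult_r f c N : Cmult (csum f N) c = csum (fun i => Cmult (f i) c) N.
Proof. induction N; simpl; auto. rewrite <- IHN. csolve. Qed.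

Lemma CSeries_trunc f N : (forall n, (N < n)%nat -> f n = RtoC 0) -> CSeries f = csum f N.
Proof. intros H. apply (CSeries_finite f N H). Qed.

Lemma Aop_trunc_sym M : (forall N, sum_n (fun i => sum_n (fun j => (Cmod (M i j)) ^ 2) N) N <= 1) ->
  (forall i j, M i j = Cconj (M j i)) ->
  forall N x y, is_l2 y -> inner (trunc N x) (Aop M y) = inner (Aop M (trunc N x)) y.
Proof. intros H Hh N x y Hy. destruct (rows_bound M H) as [R1 _].
  assert (Cv : forall i, cconv (fun j => Cmult (M i j) (y j))).
  { intros i. eapply cconv_ext; [|apply (cconv_inner (row M i) y)]. intros j. unfold row.
    f_equal. unfold Cconj; destruct (M i j); simpl; f_equal; ring. apply row_l2; auto. auto. }
  unfold inner at 1. rewrite (CSeries_trunc _ N).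
  2: { intros n Hn. unfold trunc. destruct (Nat.leb n N) eqn:E. apply Nat.leb_le in E; lia. csolve. }
  rewrite (csum_ext_loc _ (fun i => CSeries (fun j => Cmult (Cconj (x i)) (Cmult (M i j) (y j)))) N).
  2: { intros i Hi. unfold trunc. apply Nat.leb_le in Hi. rewrite Hi. unfold Aop. rewrite CSeries_scal; auto. }
  rewrite <- CSeries_csum. 2: { intros i. apply cconv_scal; auto. }
  unfold inner. apply CSeries_ext. intros j.
  unfold Aop at 1. rewrite (CSeries_trunc _ N).
  2: { intros n Hn. unfold trunc. destruct (Nat.leb n N) eqn:E. apply Nat.leb_le in E; lia. csolve. }
  rewrite csum_conj, csum_mult_r. apply csum_ext_loc. intros i Hi. unfold trunc. apply Nat.leb_le in Hi. rewrite Hi.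
  rewrite (Hh j i). csolve.
Qed.

Lemma Cmod2_minus_le a b : Cmod (Cminus a b) ^ 2 <= 2 * Cmod a ^ 2 + 2 * Cmod b ^ 2.
Proof. destruct a as [a1 a2], b as [b1 b2]. rewrite !Cmod2. simpl.
  pose proof (pow2_ge_0 (a1 + b1)); pose proof (pow2_ge_0 (a2 + b2)). nra. Qed.

Lemma Aop_minus M : (forall N, sum_n (fun i => sum_n (fun j => (Cmod (M i j)) ^ 2) N) N <= 1) ->
  forall x y, is_l2 x -> is_l2 y -> Aop M (vminus x y) = vminus (Aop M x) (Aop M y).
Proof. intros H x y Hx Hy. rewrite !vminus_eq. rewrite Aop_plus, Aop_scal; auto. apply l2_scal; auto. Qed.

Lemma Aop_sym M : (forall N, sum_n (fun i => sum_n (fun j => (Cmod (M i j)) ^ 2) N) N <= 1) ->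
  (forall i j, M i j = Cconj (M j i)) ->
  forall x y, is_l2 x -> is_l2 y -> inner x (Aop M y) = inner (Aop M x) y.
Proof. intros H Hh x y Hx Hy.
  assert (HA := fun z Hz => proj1 (Aop_bound M H z Hz)).
  assert (HN := fun z Hz => proj2 (Aop_bound M H z Hz)).
  set (D := Cminus (inner x (Aop M y)) (inner (Aop M x) y)).
  set (Kc := 2 * (n2 (Aop M y) + n2 y)).
  assert (HK : 0 <= Kc). { unfold Kc. pose proof (n2_ge0 _ (HA y Hy)). pose proof (n2_ge0 y Hy). lra. }
  assert (Bd : forall N, Cmod D ^ 2 <= Kc * n2 (vminus x (trunc N x))).
  { intros N. set (t := trunc N x). set (u := vminus x t).
    assert (Ht : is_l2 t) by (apply trunc_l2; auto). assert (Hu : is_l2 u) by (apply l2_minus; auto).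
    assert (ED : D = Cminus (inner u (Aop M y)) (inner (Aop M u) y)).
    { unfold D, u. rewrite inner_minus_l, Aop_minus, inner_minus_l; auto.
      unfold t. rewrite Aop_trunc_sym; auto. csolve. }
    rewrite ED. eapply Rle_trans. apply Cmod2_minus_le.
    assert (C1 := inner_CS u (Aop M y) Hu (HA y Hy)).
    assert (C2 := inner_CS (Aop M u) y (HA u Hu) Hy).
    assert (N1 := HN u Hu). pose proof (n2_ge0 _ Hu). pose proof (n2_ge0 _ Hy).
    pose proof (n2_ge0 _ (HA u Hu)). pose proof (n2_ge0 _ (HA y Hy)). unfold Kc. nra. }
  assert (Z : Cmod D ^ 2 <= 0).
  { destruct (Rle_or_lt (Cmod D ^ 2) 0) as [Hle|Hlt]; auto.
    destruct (trunc_small x Hx (Cmod D ^ 2 / (Kc + 1))) as [N HN2].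
    apply Rdiv_lt_0_compat; lra.
    specialize (Bd N). exfalso.
    assert (Kc * n2 (vminus x (trunc N x)) <= Kc * (Cmod D ^ 2 / (Kc + 1))) by (apply Rmult_le_compat_l; lra).
    assert (Kc * (Cmod D ^ 2 / (Kc + 1)) < Cmod D ^ 2).
    { apply Rmult_lt_reg_r with (Kc + 1). lra. unfold Rdiv. rewrite Rmult_assoc, (Rmult_assoc _ (/ (Kc+1))), Rinv_l by lra. nra. }
    lra. }
  assert (Cmod D = 0). { pose proof (Cmod_ge_0 D). nra. }
  apply Cmod_eq_0 in H0. unfold D in H0. 
  destruct (inner x (Aop M y)), (inner (Aop M x) y). unfold Cminus, Cplus, Copp in H0. simpl in H0.
  inversion H0. f_equal; lra.
Qed.


Lemma key_ineq a b c K : 0 < a -> 1 < K -> K * a <= b -> c ^ 2 <= a * b ->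
  (K - 1) ^ 2 * a <= (a + b - 2 * c) * (2 * (K + 1)).
Proof. intros Ha HK Hb Hc.
  assert (Hab : 0 < a + b) by nra.
  assert (h1 : c <= (a + b) / 2).
  { destruct (Rle_or_lt c ((a+b)/2)); auto. assert (((a+b)/2)^2 < c^2) by nra.
    assert (((a+b)/2)^2 >= a*b) by (pose proof (pow2_ge_0 (a-b)); nra). nra. }
  assert (h2 : - ((a + b) / 2) <= c).
  { destruct (Rle_or_lt (-((a+b)/2)) c); auto. assert (((a+b)/2)^2 < c^2) by nra.
    assert (((a+b)/2)^2 >= a*b) by (pose proof (pow2_ge_0 (a-b)); nra). nra. }
  assert (h3 : (b - a) ^ 2 <= (a + b - 2 * c) * (2 * (a + b))).
  { assert ((b-a)^2 <= (a + b - 2*c) * (a + b + 2*c)) by nra.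
    assert (0 <= a + b - 2 * c) by lra.
    assert ((a + b - 2*c) * (a + b + 2*c) <= (a + b - 2 * c) * (2 * (a + b))) by (apply Rmult_le_compat_l; lra).
    lra. }
  set (s := (K - 1) * a). set (t := b - a).
  assert (Hs : 0 < s) by (unfold s; nra). assert (Ht : s <= t) by (unfold s, t; nra).
  assert (h4 : (K - 1) ^ 2 * a * (a + b) <= (b - a) ^ 2 * (K + 1)).
  { assert (E1 : (K - 1) ^ 2 * a * (a + b) * a = s ^ 2 * (2 * a + t)) by (unfold s, t; ring).
    assert (E2 : (b - a) ^ 2 * (K + 1) * a = t ^ 2 * (s + 2 * a)) by (unfold s, t; ring).
    assert (s ^ 2 * (2 * a + t) <= t ^ 2 * (s + 2 * a)).
    { assert (s^2 * t <= t^2 * s) by (assert (0 <= s * t * (t - s)) by (apply Rmult_le_pos; nra); nra).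
      assert (s^2 * (2*a) <= t^2 * (2*a)) by (apply Rmult_le_compat_r; nra). lra. }
    apply Rmult_le_reg_r with a; auto. lra. }
  assert (h5 : (K - 1) ^ 2 * a * (a + b) <= (a + b - 2 * c) * (2 * (K + 1)) * (a + b)).
  { apply Rle_trans with ((b - a) ^ 2 * (K + 1)); auto.
    replace ((a + b - 2 * c) * (2 * (K + 1)) * (a + b)) with ((a + b - 2 * c) * (2 * (a + b)) * (K + 1)) by ring.
    apply Rmult_le_compat_r; lra. }
  apply Rmult_le_reg_r with (a + b); auto.
Qed.

Lemma n2_minus_expand u w : is_l2 u -> is_l2 w ->
  n2 (vminus u w) = n2 u - 2 * fst (inner u w) + n2 w.
Proof. intros Hu Hw. rewrite !n2_inner. rewrite inner_minus_l, !inner_minus_r; auto; try (apply l2_minus; auto).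
  rewrite (inner_conj u w). unfold Cminus, Cplus, Copp, Cconj. cbn [fst]. ring. Qed.

Lemma vv_p1 A : goodop A -> forall y p, is_l2 y -> vv A y p 1 = vminus (vv A y p 0) (vv A y (S p) 0).
Proof. intros H y p Hy. rewrite (vv_S A H y p 0 Hy). apply functional_extensionality; intros n.
  unfold vminus. csolve. Qed.

Lemma lower_bound A : goodop A -> forall x, is_l2 x -> fst (inner x (A x)) < 0 ->
  exists delta, 0 < delta /\ forall m, delta <= n2 (vv A x m 1).
Proof. intros H x Hx Hneg. assert (HA := good_l2 A H).
  set (e := fun p => n2 (vv A x p 0)).
  assert (He0 : e 0%nat = n2 x) by reflexivity.
  assert (Ege : forall p, 0 <= e p) by (intros p; apply n2_ge0, vv_l2; auto).
  assert (Hx0 : 0 < n2 x).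
  { destruct (Rle_lt_or_eq_dec 0 (n2 x) (n2_ge0 x Hx)) as [Hlt|Heq]; auto. exfalso.
    assert (C := inner_CS x (A x) Hx (HA x Hx)). rewrite <- Heq in C.
    assert (C2 := fst2_le_Cmod2 (inner x (A x))). nra. }
  assert (L2 : forall p, e (S p) ^ 2 <= e p * e (S (S p))).
  { intros p. unfold e. rewrite !n2_inner.
    assert (E : inner (vv A x (S p) 0) (vv A x (S p) 0) = inner (vv A x p 0) (vv A x (S (S p)) 0)).
    { rewrite !vv_pair by auto. f_equal. f_equal. lia. }
    rewrite E. eapply Rle_trans. apply fst2_le_Cmod2. rewrite <- !n2_inner. apply inner_CS; apply vv_l2; auto. }
  set (d := - fst (inner x (A x))).
  assert (L3 : (e 0%nat + d) ^ 2 <= e 0%nat * e 1%nat).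
  { assert (E : fst (inner x (vv A x 1 0)) = e 0%nat + d).
    { rewrite (vv_S A H x 0 0 Hx). rewrite inner_minus_r; auto; try (apply vv_l2; auto).
      unfold Cminus, Cplus, Copp; cbn [fst]. unfold e, d. change (vv A x 0 0) with x. change (vv A x 0 1) with (A x). rewrite n2_inner. ring. }
    rewrite <- E. eapply Rle_trans. apply fst2_le_Cmod2. apply inner_CS; auto. apply vv_l2; auto. }
  set (K := e 1%nat / e 0%nat).
  assert (HK : 1 < K).
  { unfold K. apply Rmult_lt_reg_r with (e 0%nat). lra. unfold Rdiv. rewrite Rmult_assoc, Rinv_l by lra.
    assert (0 < d) by (unfold d; lra). nra. }
  assert (L4 : forall p, 0 < e p /\ K * e p <= e (S p)).
  { induction p.
    - split. lra. unfold K. right. field. lra.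
    - destruct IHp as [P1 P2]. split. nra.
      specialize (L2 p). apply Rmult_le_reg_l with (e p); auto. assert (0 < e (S p)) by nra. assert (K * e p * e (S p) <= e (S p) * e (S p)) by (apply Rmult_le_compat_r; lra). simpl in L2. nra. }
  assert (L5 : forall p, e 0%nat <= e p).
  { induction p. lra. destruct (L4 p). nra. }
  exists ((K - 1) ^ 2 * e 0%nat / (2 * (K + 1))). split.
  { apply Rdiv_lt_0_compat. apply Rmult_lt_0_compat. nra. lra. lra. }
  intros m. rewrite vv_p1 by auto. rewrite n2_minus_expand by (apply vv_l2; auto).
  fold (e m). fold (e (S m)).
  destruct (L4 m) as [P1 P2].
  assert (Cc : fst (inner (vv A x m 0) (vv A x (S m) 0)) ^ 2 <= e m * e (S m)).
  { eapply Rle_trans. apply fst2_le_Cmod2. apply inner_CS; apply vv_l2; auto. }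
  assert (KI := key_ineq _ _ _ K P1 HK P2 Cc).
  apply Rmult_le_reg_r with (2 * (K + 1)). lra.
  unfold Rdiv. rewrite Rmult_assoc, Rinv_l by lra. specialize (L5 m). assert ((K - 1) ^ 2 * e 0%nat <= (K - 1) ^ 2 * e m) by (apply Rmult_le_compat_l; [apply pow2_ge_0|lra]). lra.
Qed.


Lemma Aop_good M : (forall N, sum_n (fun i => sum_n (fun j => (Cmod (M i j)) ^ 2) N) N <= 1) ->
  (forall i j, M i j = Cconj (M j i)) -> goodop (Aop M).
Proof. intros H Hh. split; [|split; [|split]].
  - intros x Hx; apply (Aop_bound M H x Hx).
  - apply Aop_plus; auto.
  - apply Aop_scal; auto.
  - apply Aop_sym; auto. Qed.

Lemma Aop_matA M : matA (Aop M) M.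
Proof. split. intros w _ i. reflexivity. intros i j. apply Aop_basis. Qed.

Lemma bwd_pos M : (forall N, sum_n (fun i => sum_n (fun j => (Cmod (M i j)) ^ 2) N) N <= 1) ->
  (forall i j, M i j = Cconj (M j i)) ->
  (exists tr : nat -> C,
       (forall k : nat, is_series (fun i => mpowS M k i i) (tr k)) /\
       filterlim
         (fun n : nat =>
            sum_n (fun k => Cmult (RtoC ((-1) ^ k * Binomial.C n k)) (tr k)) n)
         eventually (locally (RtoC 0))) ->
  forall x, is_l2 x -> 0 <= fst (inner x (Aop M x)).
Proof. intros Hi Hh [tr [Htr Hlim]] x Hx.
  set (A := Aop M).
  assert (H : goodop A) by (apply Aop_good; auto).
  assert (HmA : matA A M) by apply Aop_matA.
  apply C_lim_split in Hlim as [Hl1 _].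
  assert (TD := trace_decomp A M tr H HmA Htr).
  set (Sr := fun n => Series (fun i => fst (inner (basis i) (vv A (basis i) n 1)))).
  assert (HSr : is_lim_seq Sr 0).
  { eapply is_lim_seq_ext; [|exact Hl1]. intros n. apply (TD n). }
  set (g := fun m i => n2 (vv A (basis i) m 1)).
  assert (Tm : forall m, ex_series (g m) /\ Series (g m) = Sr (2 * m)%nat - Sr (S (2 * m))).
  { intros m.
    assert (Et : forall i, fst (inner (basis i) (vv A (basis i) (2 * m) 1)) - fst (inner (basis i) (vv A (basis i) (S (2 * m)) 1)) = g m i).
    { intros i. rewrite (vv_fst_S A H) by apply l2_basis. unfold g. rewrite n2_inner.
      rewrite (vv_pair A H) by apply l2_basis. replace (m + m)%nat with (2 * m)%nat by lia. simpl (1 + 1)%nat. ring. }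
    destruct (TD (2 * m)%nat) as [E1 _]. destruct (TD (S (2 * m))) as [E2 _].
    split. exact (exs_ext _ _ Et (exs_minus _ _ E1 E2)).
    rewrite <- (Series_ext _ _ Et). unfold Sr. apply Series_minus; auto. }
  assert (HT : is_lim_seq (fun m => Series (g m)) 0).
  { eapply is_lim_seq_ext. intros m. symmetry. apply (proj2 (Tm m)).
    replace 0 with (0 - 0) by ring. apply is_lim_seq_minus'.
    - apply (is_lim_seq_subseq Sr 0 (fun m => 2 * m)%nat); auto. apply eventually_subseq. intros; lia.
    - apply (is_lim_seq_subseq Sr 0 (fun m => S (2 * m))%nat); auto. apply eventually_subseq. intros; lia. }
  assert (Bd : forall m, n2 (vv A x m 1) <= Series (g m) * n2 x).
  { intros m. unfold n2 at 1. rewrite <- Series_scal_r. apply Series_le.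
    - intros i. split. apply pow2_ge_0. rewrite <- (inner_basis i (vv A x m 1)).
      rewrite <- (vv_sym A H) by (auto; apply l2_basis). unfold g. apply inner_CS; auto. apply vv_l2, l2_basis; auto.
    - apply ex_series_scal_r. apply (proj1 (Tm m)). }
  destruct (Rle_or_lt 0 (fst (inner x (A x)))) as [Hle|Hlt]; auto. exfalso.
  destruct (lower_bound A H x Hx Hlt) as [delta [Hd Hlb]].
  assert (Hx0 : 0 < n2 x).
  { destruct (Rle_lt_or_eq_dec 0 (n2 x) (n2_ge0 x Hx)) as [Hl|Heq]; auto.
    specialize (Hlb 0%nat). specialize (Bd 0%nat). rewrite <- Heq in Bd. lra. }
  apply is_lim_seq_spec in HT. destruct (HT (mkposreal (delta / n2 x) (Rdiv_lt_0_compat _ _ Hd Hx0))) as [N HN].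
  specialize (HN N (le_n N)). simpl in HN. specialize (Hlb N). specialize (Bd N).
  apply Rabs_def2 in HN. rewrite Rminus_0_r in HN. destruct HN as [HN _].
  assert (Series (g N) * n2 x < delta).
  { apply Rmult_lt_reg_r with (/ n2 x). apply Rinv_0_lt_compat; auto.
    rewrite Rmult_assoc, Rinv_r by lra. lra. }
  lra.
Qed.


Theorem theorem2p6 (M : nat -> nat -> C) :
  represents_state M <->
  ( (* (i) *)
    (forall N : nat,
       sum_n (fun i => sum_n (fun j => (Cmod (M i j)) ^ 2) N) N <= 1) /\
    (* (ii) *)
    (forall i j : nat, M i j = Cconj (M j i)) /\
    (* (iii) *)
    (exists tr : nat -> C,
       (forall k : nat, is_series (fun i => mpowS M k i i) (tr k)) /\
       filterlim
         (fun n : nat =>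
            sum_n (fun k => Cmult (RtoC ((-1) ^ k * Binomial.C n k)) (tr k)) n)
         eventually (locally (RtoC 0))) /\
    (* (iv) *)
    is_series (fun i => M i i) (RtoC 1) ).
Proof. split.
  - intros [A [HD HM]]. assert (H := dens_good A HD). assert (Hp := dens_pos A HD).
    assert (Htr : is_series (fun i => M i i) (RtoC 1)).
    { destruct HD as [_ [_ [_ [_ [_ T]]]]]. eapply is_series_ext; [|exact T]. intros i; apply HM. }
    assert (Htr1 := proj1 (proj1 (is_series_C _ _) Htr)). simpl in Htr1.
    split; [|split; [|split]].
    + apply (fwd_i A M H Hp HM Htr1).
    + apply (fwd_herm A M H HM).
    + apply (fwd_iii A M HD HM).
    + exact Htr.
  - intros [Hi [Hh [Hiii Hiv]]]. exists (Aop M).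
    assert (Hb : forall i j, inner (basis i) (Aop M (basis j)) = M i j).
    { intros i j. rewrite inner_basis. apply Aop_basis. }
    split; auto.
    split; [|split; [|split; [|split; [|split]]]].
    + intros x Hx. apply (Aop_bound M Hi x Hx).
    + intros x y Hx Hy. exact (Aop_plus M Hi x y Hx Hy).
    + intros c x Hx. exact (Aop_scal M Hi c x Hx).
    + intros x y Hx Hy. apply Aop_sym; auto.
    + apply bwd_pos; auto.
    + eapply is_series_ext; [|exact Hiv]. intros i. symmetry. apply Hb.
Qed.
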